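(* Let $\mathcal{S} \subseteq M_{m,n}$ be a subspace and let $P_{\mathcal{S}} \in M_n \otimes M_m$ be the orthogonal projection onto $\mathrm{vec}(\mathcal{S}) \subseteq \mathbb{R}^n\otimes\mathbb{R}^m$. Then \[ d(\mathcal{S})^2 \le W^{1+i}_{\max}(P_{\mathcal{S}}). \] In particular, if $W^{1+i}_{\max}(P_{\mathcal{S}}) < 1$ then $\mathcal{S}$ is rank-one-avoiding, i.e. no matrix in $\mathcal{S}$ has rank exactly $1$.
   Context: $M_{m,n}$ denotes real $m\times n$ matrices, $M_n = M_{n,n}$, and $M_n\otimes M_m$ is identified with $M_{nm}$ via the Kronecker product. The vectorization $\mathrm{vec}: M_{m,n}\to\mathbb{R}^n\otimes\mathbb{R}^m = \mathbb{R}^{mn}$ stacks the columns of a matrix on top of one another (first column on top), and $\mathrm{vec}(\mathcal{S}) = \{\mathrm{vec}(Y): Y\in\mathcal{S}\}$. For a subspace $\mathcal{S}$, $d(\mathcal{S}) = \max\{\|Y\| : Y\in\mathcal{S}, \|Y\|_F \le 1\}$, where $\|Y\|$ is the operator norm (largest singular value) and $\|Y\|_F$ the Frobenius norm. For $A = \sum_j X_j \otimes Y_j \in M_n\otimes M_m$, the partial transpose is $A^\Gamma = \sum_j X_j \otimes Y_j^T$. The numerical range of $A\in M_N(\mathbb{C})$ is $W(A) = \{\mathbf{x}^*A\mathbf{x} : \mathbf{x}\in\mathbb{C}^N, \|\mathbf{x}\|=1\}$. For real $B$, $W^{1+i}(B) = \{c\in\mathbb{R} : c(1+i)\in W(B+iB^\Gamma)\}$,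 a nonempty compact interval with maximum $W^{1+i}_{\max}(B)$. *)

(* Defs.v *)
From HB Require Import structures.
From mathcomp Require Import all_boot all_order all_algebra.
From mathcomp Require Import complex mxtens.
From mathcomp Require Import classical_sets reals.
Set Implicit Arguments. Unset Strict Implicit. Unset Printing Implicit Defensive.
Import Order.TTheory GRing.Theory Num.Theory.
Local Open Scope ring_scope.
Local Open Scope classical_set_scope.

Section Defs.
Variable R : realType.

(* Index convention: 'I_(n*m) ~ 'I_n * 'I_m via mxtens_index (j,i) = j*m + i,
   i.e. R^n (x) R^m = R^(nm) and M_n (x) M_m = M_(nm) via the Kronecker
   product (this is the indexing of mxtens.tensmx). *)

(* vec : M_{m,n} -> R^n (x) R^m, stacking the columns (first column on top):
   entry j*m + i of vec Y is Y i j. *)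
Definition vecm m n (Y : 'M[R]_(m, n)) : 'cV[R]_(n * m) :=
  \col_k Y (mxtens_unindex k).2 (mxtens_unindex k).1.

(* Partial transpose on M_n (x) M_m = M_(nm): transposes the second
   (M_m) tensor factor: (X (x) Y)^Gamma = X (x) Y^T. *)
Definition ptrans n m (A : 'M[R]_(n * m)) : 'M[R]_(n * m) :=
  \matrix_(k, l)
    A (mxtens_index ((mxtens_unindex k).1, (mxtens_unindex l).2))
      (mxtens_index ((mxtens_unindex l).1, (mxtens_unindex k).2)).

Definition vnorm k (x : 'cV[R]_k) : R := Num.sqrt (\sum_i x i 0 ^+ 2).
Definition frobnorm m n (Y : 'M[R]_(m, n)) : R :=
  Num.sqrt (\sum_i \sum_j Y i j ^+ 2).
Definition opnorm m n (Y : 'M[R]_(m, n)) : R :=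
  sup [set vnorm (Y *m x) | x in [set x : 'cV[R]_n | vnorm x = 1]].

Definition dS m n (S : {vspace 'M[R]_(m, n)}) : R :=
  sup [set opnorm Y | Y in [set Y : 'M[R]_(m, n) | Y \in S /\ frobnorm Y <= 1]].

Definition is_orthoproj m n (S : {vspace 'M[R]_(m, n)}) (P : 'M[R]_(n * m)) :=
  [/\ P^T = P, P *m P = P &
      forall v : 'cV[R]_(n * m),
        (exists w, v = P *m w) <-> (exists2 Y, Y \in S & v = vecm Y)].

Local Open Scope complex_scope.
Definition cmx N M (A : 'M[R]_(N, M)) : 'M[R[i]]_(N, M) :=
  map_mx (fun r => r%:C) A.
Definition adj N (x : 'cV[R[i]]_N) : 'rV[R[i]]_N := (map_mx conjc x)^T.

Definition numrange N (A : 'M[R[i]]_N) : set R[i] :=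
  [set (adj x *m A *m x) 0 0 | x in [set x : 'cV[R[i]]_N | (adj x *m x) 0 0 = 1]].

Definition W1i n m (B : 'M[R]_(n * m)) : set R :=
  [set c | numrange (cmx B + 'i *: cmx (ptrans B)) (c%:C * (1 + 'i))].
Definition W1i_max n m (B : 'M[R]_(n * m)) : R := sup (W1i B).

End Defs.

(* Main.v *)
Require Import Defs.
From HB Require Import structures.
From mathcomp Require Import all_boot all_order all_algebra.
From mathcomp Require Import complex mxtens.
From mathcomp Require Import classical_sets reals.
From mathcomp Require Import ring lra.
Import Order.TTheory GRing.Theory Num.Theory.
Set Implicit Arguments. Unset Strict Implicit. Unset Printing Implicit Defensive.
Local Open Scope ring_scope.

Section S.
Variable R : realType.

Definition sdot k (a b : 'cV[R]_k) : R := \sum_i a i 0 * b i 0.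

Lemma sdotE k (a b : 'cV[R]_k) : sdot a b = (trmx a *m b) 0 0.
Proof. by rewrite /sdot !mxE; apply: eq_bigr => i _; rewrite mxE. Qed.

Lemma sum_tens n m (F : 'I_(n * m) -> R) :
  \sum_k F k = \sum_(j < n) \sum_(i < m) F (mxtens_index (j, i)).
Proof.
rewrite pair_big /=.
rewrite (reindex (@mxtens_unindex n m)) /=; last first.
  by exists (@mxtens_index n m) => x _; rewrite ?mxtens_indexK ?mxtens_unindexK.
by apply: eq_bigr => k _; rewrite -[in LHS](mxtens_unindexK k).
Qed.

Lemma vecmE m n (Y : 'M[R]_(m, n)) j i : vecm Y (mxtens_index (j, i)) 0 = Y i j.
Proof. by rewrite /vecm mxE mxtens_indexK. Qed.

Definition pv m n (u : 'cV[R]_m) (x : 'cV[R]_n) : 'cV[R]_(n * m) := vecm (u *m trmx x).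

Lemma pvE m n (u : 'cV[R]_m) (x : 'cV[R]_n) j i :
  pv u x (mxtens_index (j, i)) 0 = u i 0 * x j 0.
Proof.
rewrite /pv vecmE mxE big_ord1 !mxE. done.
Qed.

Lemma sum_ord1 (F : 'I_1 -> R) : \sum_(i < 1) F i = F 0.
Proof. by rewrite big_ord1. Qed.

Lemma pv_norm m n (u : 'cV[R]_m) (x : 'cV[R]_n) :
  sdot (pv u x) (pv u x) = sdot u u * sdot x x.
Proof.
rewrite /sdot sum_tens mulrC big_distrl /=; apply: eq_bigr => j _.
rewrite big_distrr /=; apply: eq_bigr => i _; rewrite !pvE; ring.
Qed.

Lemma pv_dot m n (u : 'cV[R]_m) (x : 'cV[R]_n) (Y : 'M[R]_(m, n)) :
  sdot (pv u x) (vecm Y) = (trmx u *m Y *m x) 0 0.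
Proof.
rewrite /sdot sum_tens mxE /=; apply: eq_bigr => j _.
rewrite mxE big_distrl /=; apply: eq_bigr => i _; rewrite pvE vecmE !mxE; ring.
Qed.

Lemma vnormE k (x : 'cV[R]_k) : vnorm x ^+ 2 = sdot x x.
Proof.
rewrite /vnorm sqr_sqrtr /sdot; first by apply: eq_bigr => i _; rewrite expr2.
by apply: sumr_ge0 => i _; rewrite sqr_ge0.
Qed.

Lemma sdot_ge0 k (x : 'cV[R]_k) : 0 <= sdot x x.
Proof. by apply: sumr_ge0 => i _; rewrite -expr2 sqr_ge0. Qed.

Lemma frobE m n (Y : 'M[R]_(m, n)) : frobnorm Y ^+ 2 = sdot (vecm Y) (vecm Y).
Proof.
rewrite /frobnorm sqr_sqrtr; last first.
  by apply: sumr_ge0 => i _; apply: sumr_ge0 => j _; rewrite sqr_ge0.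
rewrite /sdot sum_tens exchange_big /=; apply: eq_bigr => i _.
by apply: eq_bigr => j _; rewrite vecmE expr2.
Qed.

Lemma swap4 a b (F : 'I_a -> 'I_b -> 'I_a -> 'I_b -> R) :
  \sum_i \sum_j \sum_k \sum_l F i j k l = \sum_i \sum_j \sum_k \sum_l F i l k j.
Proof.
apply: eq_bigr => i _.
transitivity (\sum_j \sum_l \sum_k F i j k l).
  by apply: eq_bigr => j _; rewrite exchange_big.
rewrite exchange_big /=; apply: eq_bigr => l _; by rewrite exchange_big.
Qed.

Lemma pv_ptrans m n (u : 'cV[R]_m) (x : 'cV[R]_n) (A : 'M[R]_(n * m)) :
  sdot (pv u x) (ptrans A *m pv u x) = sdot (pv u x) (A *m pv u x).
Proof.
rewrite /sdot !sum_tens.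
have E : forall B : 'M[R]_(n * m), forall j i,
  (B *m pv u x) (mxtens_index (j, i)) 0 =
  \sum_(k < n) \sum_(l < m) B (mxtens_index (j, i)) (mxtens_index (k, l)) * (u l 0 * x k 0).
  by move=> B j i; rewrite mxE sum_tens; apply: eq_bigr => k _; apply: eq_bigr => l _; rewrite pvE.
transitivity (\sum_(j < n) \sum_(i < m) \sum_(k < n) \sum_(l < m)
   (u i 0 * x j 0) * (A (mxtens_index (j, l)) (mxtens_index (k, i)) * (u l 0 * x k 0))).
  apply: eq_bigr => j _; apply: eq_bigr => i _; rewrite E pvE big_distrr /=.
  apply: eq_bigr => k _; rewrite big_distrr /=; apply: eq_bigr => l _.
  by rewrite /ptrans mxE !mxtens_indexK.
rewrite swap4; apply: eq_bigr => j _; apply: eq_bigr => i _; rewrite E pvE big_distrr /=.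
apply: eq_bigr => k _; rewrite big_distrr /=; apply: eq_bigr => l _.
ring.
Qed.

Lemma sdot_expand k (w y : 'cV[R]_k) t :
  sdot (w - t *: y) (w - t *: y) = sdot w w - 2 * t * sdot w y + t ^+ 2 * sdot y y.
Proof.
rewrite /sdot !mulr_sumr -sumrB -big_split /=; apply: eq_bigr => i _; rewrite !mxE; ring.
Qed.

Lemma cs_ineq k (w y : 'cV[R]_k) : sdot y y <= 1 -> sdot w y ^+ 2 <= sdot w w.
Proof.
move=> hy; have h0 := sdot_ge0 (w - sdot w y *: y).
have hy0 := sdot_ge0 y.
rewrite sdot_expand in h0.
have h1 : 0 <= sdot w y ^+ 2 * (1 - sdot y y) by rewrite mulr_ge0 ?sqr_ge0 ?subr_ge0.
move: h0 h1; generalize (sdot w w) (sdot w y) (sdot y y) => a b c h0 h1.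
have -> : b ^+ 2 = b * b by rewrite expr2.
rewrite expr2 in h0 h1. nra.
Qed.

Lemma op_fix m n (S : {vspace 'M[R]_(m, n)}) P Y :
  is_orthoproj S P -> Y \in S -> P *m vecm Y = vecm Y.
Proof.
case=> _ PP H YS.
have [w ->] : exists w, vecm Y = P *m w by apply/(H (vecm Y)); exists Y.
by rewrite mulmxA PP.
Qed.

Lemma op_quad k (P : 'M[R]_k) z : P^T = P -> P *m P = P ->
  sdot z (P *m z) = sdot (P *m z) (P *m z).
Proof.
move=> PT PP; by rewrite !sdotE trmx_mul PT -mulmxA (mulmxA P) PP.
Qed.

Lemma op_sym k (P : 'M[R]_k) z y : P^T = P -> sdot z (P *m y) = sdot (P *m z) y.
Proof. by move=> PT; rewrite !sdotE trmx_mul PT mulmxA. Qed.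

Lemma core_real m n (S : {vspace 'M[R]_(m, n)}) P Y (u : 'cV[R]_m) (x : 'cV[R]_n) :
  is_orthoproj S P -> Y \in S -> frobnorm Y <= 1 ->
  (trmx u *m Y *m x) 0 0 ^+ 2 <= sdot (pv u x) (P *m pv u x).
Proof.
move=> hP YS hY; have [PT PP _] := hP.
rewrite -pv_dot -(op_fix hP YS) op_sym // op_quad //.
apply: cs_ineq; rewrite -frobE.
have hf : 0 <= frobnorm Y by rewrite /frobnorm sqrtr_ge0.
by rewrite -(expr1n _ 2) ler_pXn2r ?nnegrE.
Qed.

Local Open Scope complex_scope.

Lemma cmxM a b c (A : 'M[R]_(a, b)) (B : 'M[R]_(b, c)) : cmx (A *m B) = cmx A *m cmx B.
Proof.
apply/matrixP => i j; rewrite !mxE rmorph_sum; apply: eq_bigr => k _.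
by rewrite rmorphM !mxE.
Qed.

Lemma adj_cmx k (z : 'cV[R]_k) : adj (cmx z) = cmx z^T.
Proof. by apply/matrixP => i j; rewrite !mxE conjc_real. Qed.

Lemma quad_cmx k (z : 'cV[R]_k) (A : 'M[R]_k) :
  (adj (cmx z) *m cmx A *m cmx z) 0 0 = (sdot z (A *m z))%:C.
Proof. by rewrite adj_cmx -!cmxM sdotE mulmxA mxE. Qed.

Lemma in_W1i n m (P : 'M[R]_(n * m)) (z : 'cV[R]_(n * m)) :
  sdot z z = 1 -> sdot z (ptrans P *m z) = sdot z (P *m z) ->
  W1i P (sdot z (P *m z)).
Proof.
move=> hz hQ; rewrite /W1i /numrange /=.
exists (cmx z).
  rewrite adj_cmx -cmxM mxE -sdotE hz.
  by [].
rewrite (mulmxDr (adj (cmx z))) mulmxDl -scalemxAr -scalemxAl mxE [in X in _ + X]mxE !quad_cmx hQ.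
by rewrite mulrDr mulr1 [_ * 'i]mulrC.
Qed.

Lemma Re_c1i (c : R) : complex.Re (real_complex R c * (1 + 'i)) = c.
Proof. by rewrite /= addr0 mulr1 mul0r subr0. Qed.

Lemma unit_entry N (x : 'cV[R[i]]_N) k : (adj x *m x) 0 0 = 1 -> `|x k 0| <= 1.
Proof.
move=> hx.
have E : (adj x *m x) 0 0 = \sum_i `|x i 0| ^+ 2.
  rewrite mxE; apply: eq_bigr => i _; rewrite !mxE sqr_normc mulrC //.
have : `|x k 0| ^+ 2 <= 1.
  rewrite -hx E (bigD1 k) //= lerDl; apply: sumr_ge0 => i _; by rewrite exprn_ge0.
by rewrite -[X in _ <= X](expr1n _ 2) ler_pXn2r // nnegrE.
Qed.

Lemma numrange_ub N (A : 'M[R[i]]_N) :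
  exists B : R, forall c : R, numrange A (real_complex R c * (1 + 'i)) -> c <= B.
Proof.
exists (complex.Re (\sum_l \sum_k `|A k l|)) => c [x hx hw].
have hw' : `|real_complex R c * (1 + 'i)| <= \sum_l \sum_k `|A k l|.
  rewrite -hw mxE; apply: le_trans (ler_norm_sum _ _ _) _.
  apply: ler_sum => l _; rewrite normrM.
  apply: le_trans (ler_piMr _ (unit_entry l hx)) _; first exact: normr_ge0.
  rewrite mxE; apply: le_trans (ler_norm_sum _ _ _) _.
  apply: ler_sum => k _; rewrite normrM mulrC.
  apply: ler_piMr; first exact: normr_ge0.
  by rewrite mxE mxE normcJ unit_entry.
have h1 : real_complex R c <= \sum_l \sum_k `|A k l|.
  apply: le_trans hw'; apply: le_trans (normc_ge_Re _).
  by rewrite Re_c1i lecR ler_norm.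
by move: h1; rewrite lecE => /andP[].
Qed.

Local Close Scope complex_scope.

Lemma W1i_hasub n m (P : 'M[R]_(n * m)) : has_ubound (W1i P).
Proof.
have [B HB] := numrange_ub (cmx P + 'i%C *: cmx (ptrans P)).
by exists B => c hc; apply: HB.
Qed.

Lemma core m n (S : {vspace 'M[R]_(m, n)}) P Y (u : 'cV[R]_m) (x : 'cV[R]_n) :
  is_orthoproj S P -> Y \in S -> frobnorm Y <= 1 ->
  sdot u u = 1 -> sdot x x = 1 ->
  (trmx u *m Y *m x) 0 0 ^+ 2 <= W1i_max P.
Proof.
move=> hP YS hY hu hx.
apply: le_trans (core_real u x hP YS hY) _.
have hz : sdot (pv u x) (pv u x) = 1 by rewrite pv_norm hu hx mulr1.
have hin := in_W1i hz (pv_ptrans u x P).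
apply: sup_upper_bound => //; split; [by exists (sdot (pv u x) (P *m pv u x)) | exact: W1i_hasub].
Qed.

Lemma sup_ge0_gen (E : set R) : (forall e, E e -> 0 <= e) -> 0 <= sup E.
Proof.
move=> h; case: (boolp.pselect (has_sup E)) => [hs|hs]; last by rewrite sup_out.
have [e he] := hs.1; apply: le_trans (h e he) _; exact: sup_upper_bound.
Qed.

Lemma sup_le_gen (E : set R) s : 0 <= s -> (forall e, E e -> e <= s) -> sup E <= s.
Proof.
move=> s0 h; case: (boolp.pselect (E !=set0)%classic) => [ne|ne]; first exact: ge_sup.
have -> : E = set0.
  by apply/seteqP; split => e he //; exfalso; apply: ne; exists e.
by rewrite sup0.
Qed.

Lemma sdotZl k (v y : 'cV[R]_k) a : sdot (a *: v) y = a * sdot v y.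
Proof. by rewrite /sdot mulr_sumr; apply: eq_bigr => i _; rewrite mxE mulrA. Qed.

Lemma sdotC k (v y : 'cV[R]_k) : sdot v y = sdot y v.
Proof. by apply: eq_bigr => i _; rewrite mulrC. Qed.

Lemma W_ge0 m n (S : {vspace 'M[R]_(m, n)}) P : is_orthoproj S P -> 0 <= W1i_max P.
Proof.
move=> hP.
case: (posnP m) => [m0|mpos]; last case: (posnP n) => [n0|npos].
- rewrite /W1i_max; apply: sup_ge0_gen => c [x hx _].
  exfalso; move: hx; rewrite /= mxE big1 ?(eqxx, oner_eq0) //.
    by move=> /eqP; rewrite eq_sym oner_eq0.
  by move=> [k hk]; exfalso; move: hk; rewrite m0 muln0.
- rewrite /W1i_max; apply: sup_ge0_gen => c [x hx _].
  exfalso; move: hx; rewrite /= mxE big1 ?(eqxx, oner_eq0) //.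
    by move=> /eqP; rewrite eq_sym oner_eq0.
  by move=> [k hk]; exfalso; move: hk; rewrite n0 mul0n.
- pose e k (i0 : 'I_k) : 'cV[R]_k := \col_i (i == i0)%:R.
  have he : forall k (i0 : 'I_k), sdot (e k i0) (e k i0) = 1.
    move=> k i0; rewrite /sdot (bigD1 i0) //= big1 ?addr0; first by rewrite !mxE eqxx mulr1.
    by move=> i /negPf hi; rewrite !mxE hi mulr0.
  have := core (u := e m (Ordinal mpos)) (x := e n (Ordinal npos)) hP (mem0v S) _ (he _ _) (he _ _).
  rewrite mulmx0 mul0mx mxE expr0n /=; apply.
  by rewrite /frobnorm big1 ?sqrtr0 // => i _; rewrite big1 // => j _; rewrite mxE expr0n.
Qed.

Lemma vnorm_ge0 k (x : 'cV[R]_k) : 0 <= vnorm x.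
Proof. exact: sqrtr_ge0. Qed.

Lemma opnorm_ge0 m n (Y : 'M[R]_(m, n)) : 0 <= opnorm Y.
Proof. by apply: sup_ge0_gen => e [x _ <-]; exact: vnorm_ge0. Qed.

Lemma opnorm_le m n (S : {vspace 'M[R]_(m, n)}) P Y :
  is_orthoproj S P -> Y \in S -> frobnorm Y <= 1 ->
  opnorm Y <= Num.sqrt (W1i_max P).
Proof.
move=> hP YS hY; apply: sup_le_gen; first exact: sqrtr_ge0.
move=> e [x hx <-]; have hx1 : sdot x x = 1 by rewrite -vnormE hx expr1n.
set y := Y *m x; set ny := vnorm y.
have ny0 : 0 <= ny by exact: vnorm_ge0.
have [->|nz] := eqVneq ny 0; first exact: sqrtr_ge0.
have nyp : 0 < ny by rewrite lt0r nz.
have hyy : sdot y y = ny ^+ 2 by rewrite vnormE.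
pose u := ny^-1 *: y.
have hu : sdot u u = 1.
  rewrite sdotZl sdotC sdotZl hyy; field; exact: nz.
have := core hP YS hY hu hx1.
have -> : (trmx u *m Y *m x) 0 0 = ny.
  rewrite -mulmxA -sdotE sdotZl hyy; field; exact: nz.
move=> h; rewrite -[ny]ger0_norm // -sqrtr_sqr; exact: ler_wsqrtr.
Qed.

Lemma part1 m n (S : {vspace 'M[R]_(m, n)}) P :
  is_orthoproj S P -> dS S ^+ 2 <= W1i_max P.
Proof.
move=> hP; have W0 := W_ge0 hP.
have d0 : 0 <= dS S by apply: sup_ge0_gen => e [Y _ <-]; exact: opnorm_ge0.
have : dS S <= Num.sqrt (W1i_max P).
  apply: sup_le_gen; first exact: sqrtr_ge0.
  by move=> e [Y [YS hY] <-]; exact: opnorm_le hP YS hY.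
rewrite -(ler_pXn2r (n := 2)) ?nnegrE ?sqrtr_ge0 // sqr_sqrtr //.
Qed.

Lemma sdot_ge0_term k (v : 'cV[R]_k) l : 0 <= v l 0 * v l 0.
Proof. by rewrite -expr2 sqr_ge0. Qed.

Lemma sdot0 k (v : 'cV[R]_k) : sdot v v = 0 -> v = 0.
Proof.
move=> /psumr_eq0P h; apply/matrixP => i j; rewrite (ord1 j) mxE.
have /eqP := h (fun l _ => sdot_ge0_term v l) i isT.
by rewrite mulf_eq0 orbb => /eqP.
Qed.

Lemma vecmZ m n (Y : 'M[R]_(m, n)) c : vecm (c *: Y) = c *: vecm Y.
Proof. by apply/matrixP => i j; rewrite !mxE. Qed.

Lemma pvZ m n (u : 'cV[R]_m) (x : 'cV[R]_n) c d : pv (c *: u) (d *: x) = (c * d) *: pv u x.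
Proof.
apply/matrixP => k j; rewrite (ord1 j) -[k](mxtens_unindexK k).
case: (mxtens_unindex k) => a b; rewrite [RHS]mxE !pvE !mxE; ring.
Qed.

Lemma vecm0 m n (Y : 'M[R]_(m, n)) : vecm Y = 0 -> Y = 0.
Proof.
move=> h; apply/matrixP => i j; rewrite -vecmE h !mxE //.
Qed.

Lemma rank_one_W m n (S : {vspace 'M[R]_(m, n)}) P Y :
  is_orthoproj S P -> Y \in S -> \rank Y = 1%N -> 1 <= W1i_max P.
Proof.
move=> hP YS hr.
have Ynz : Y != 0 by rewrite -mxrank_eq0 hr.
have [a [b eY]] : exists (a : 'cV[R]_m) (b : 'rV[R]_n), Y = a *m b.
  have := mulmx_base Y; move: (col_base Y) (row_base Y); rewrite hr => a b <-.
  by exists a, b.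
set bT := trmx b.
have vY : vecm Y = pv a bT by rewrite /pv /bT trmxK eY.
set f := frobnorm Y.
have f0 : 0 <= f by exact: sqrtr_ge0.
have f2 : f ^+ 2 = sdot a a * sdot bT bT by rewrite /f frobE vY pv_norm.
have fnz : f != 0.
  apply/eqP => hf; move: Ynz; rewrite (vecm0 (Y := Y)) ?eqxx //.
  by apply: sdot0; rewrite -frobE -/f hf expr0n.
have sa0 := sdot_ge0 a; have sb0 := sdot_ge0 bT.
pose Y' := f^-1 *: Y.
have Y'S : Y' \in S by exact: memvZ.
have hY' : frobnorm Y' <= 1.
  have : frobnorm Y' ^+ 2 = 1.
    rewrite frobE /Y' vecmZ sdotZl sdotC sdotZl -frobE -/f; field; exact: fnz.
  move=> h; rewrite -(ler_pXn2r (n := 2)) ?nnegrE ?sqrtr_ge0 // h expr1n //.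
have san : sdot a a != 0 by apply: contraNneq fnz => h; rewrite -sqrf_eq0 f2 h mul0r.
have sbn : sdot bT bT != 0 by apply: contraNneq fnz => h; rewrite -sqrf_eq0 f2 h mulr0.
pose u := (Num.sqrt (sdot a a))^-1 *: a.
pose x := (Num.sqrt (sdot bT bT))^-1 *: bT.
have hs : forall k (v : 'cV[R]_k), sdot v v != 0 ->
    sdot ((Num.sqrt (sdot v v))^-1 *: v) ((Num.sqrt (sdot v v))^-1 *: v) = 1.
  move=> k v hv; rewrite sdotZl sdotC sdotZl mulrA -expr2 exprVn sqr_sqrtr ?sdot_ge0 //.
  by rewrite mulVf.
have := core hP Y'S hY' (hs _ _ san) (hs _ _ sbn).
rewrite -pv_dot pvZ /Y' vecmZ vY sdotZl sdotC sdotZl pv_norm -f2.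
have -> : (Num.sqrt (sdot a a))^-1 * (Num.sqrt (sdot bT bT))^-1 = f^-1.
  by rewrite -invfM -sqrtrM // -f2 sqrtr_sqr ger0_norm.
have -> : f^-1 * (f^-1 * f ^+ 2) = 1 by field.
by rewrite expr1n.
Qed.

End S.

Unset Implicit Arguments.
Set Strict Implicit.

Theorem theorem4p1 (R : realType) (m n : nat) (S : {vspace 'M[R]_(m, n)})
    (P : 'M[R]_(n * m)) :
  is_orthoproj S P ->
  dS S ^+ 2 <= W1i_max P /\
  (W1i_max P < 1 -> forall Y : 'M[R]_(m, n), Y \in S -> \rank Y != 1%N).
Proof.
move=> hP; split; first exact: part1 hP.
move=> hW Y YS; apply/eqP => hr.
have := rank_one_W hP YS hr.
by rewrite leNgt hW.
Qed.
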